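(* Let $\{\Theta_n\}_{n\ge0}$ be a translational family of lattice congruences, $\Theta_n$ a congruence on the weak order on $S_n$. Then the map $c:\mathbb{K}[Z^\Theta_\infty]\to\mathbb{K}[S_\infty]$ is an injective algebra homomorphism, i.e. $c(u\bullet_Z v)=c(u)\bullet_S c(v)$ for all $u\in Z_p$, $v\in Z_q$, so $c$ embeds $(\mathbb{K}[Z^\Theta_\infty],\bullet_Z)$ as a subalgebra of $(\mathbb{K}[S_\infty],\bullet_S)$.
   Context: $S_n$ is the set of permutations of $[n]=\{1,\dots,n\}$ in one-line notation $x=x_1\cdots x_n$, with the (right) weak order: $x\le y$ iff $\{(x_i,x_j):x_i<x_j,\ i>j\}\subseteq\{(y_i,y_j):y_i<y_j,\ i>j\}$; this is a lattice. For $u\in S_p$, $v\in S_q$, $u\times v\in S_{p+q}$ is $u_1\cdots u_p(p+v_1)\cdots(p+v_q)$. The standardization $\mathrm{st}(a_1,\dots,a_k)$ of a sequence of distinct integers is the $u\in S_k$ with $u_i<u_j\iff a_i<a_j$. For $x\in S_{p+q}$ let $x_{\bar p}:=u\times v$, where $u$ is the standardization of the subsequence of $x$ consisting of entries in $[1,p]$ and $v$ the standardization of the subsequence of entries in $[p+1,p+q]$. For a congruence $\Theta_n$ on $S_n$, $\pi_\downarrow x$ denotes the minimum of the class of $x$. Translational: for all $p,q\ge0$, $u,u'\in S_p$, $v,v'\in S_q$: $u\times v\equiv u'\times v'\pmod{\Theta_{p+q}}$ iff $u\equiv u'\pmod{\Theta_p}$ and $v\equiv v'\pmod{\Theta_q}$.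 $\mathbb{K}$ is a field; $\mathbb{K}[S_\infty]=\bigoplus_{n\ge0}\mathbb{K}[S_n]$ with the Malvenuto–Reutenauer product $u\bullet_S v=\sum_{x\in S_{p+q},\,x_{\bar p}=u\times v}x$ (the sum of all shuffles of $u$ and $v$). Let $Z_n=\{x\in S_n:\pi_\downarrow x=x\}$ (identified with $S_n/\Theta_n$), $\mathbb{K}[Z^\Theta_\infty]=\bigoplus_{n\ge0}\mathbb{K}[Z_n]$, with product $u\bullet_Z v=\sum_{x\in Z_{p+q},\,x_{\bar p}=u\times v}x$ for $u\in Z_p$, $v\in Z_q$. The linear map $c$ sends $x\in Z_n$ to the sum of all elements of the $\Theta_n$-class of $x$. *)

(* Defs.v *)
(* Permutations of [n] are encoded as 'S_n = {perm 'I_n},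
   with values 0..n-1 instead of 1..n (x_i = x i). *)
From HB Require Import structures.
From mathcomp Require Import all_boot all_order all_fingroup all_algebra.
Set Implicit Arguments. Unset Strict Implicit. Unset Printing Implicit Defensive.
Import GRing.Theory.
Local Open Scope ring_scope.

(* (a,b) is an inversion (as a pair of values) of x: a < b and the value a
   appears at a later position than b, i.e. (x_i, x_j) with x_i<x_j, i>j. *)
Definition inv_pair n (x : 'S_n) (a b : 'I_n) : bool :=
  ((a < b)%N && (x^-1%g b < x^-1%g a)%N).

Definition weak_le n (x y : 'S_n) : bool :=
  [forall a, forall b, inv_pair x a b ==> inv_pair y a b].

Definition is_meet n (m x y : 'S_n) : bool :=
  [&& weak_le m x, weak_le m y &
      [forall z, (weak_le z x && weak_le z y) ==> weak_le z m]].

Definition is_join n (j x y : 'S_n) : bool :=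
  [&& weak_le x j, weak_le y j &
      [forall z, (weak_le x z && weak_le y z) ==> weak_le j z]].

(* A lattice congruence of the weak order: an equivalence relation compatible
   with meets and joins (meets/joins are stated relationally; they exist and
   are unique since the weak order is a lattice). *)
Definition lattice_congruence n (th : rel 'S_n) : Prop :=
  [/\ (forall x, th x x),
      (forall x y, th x y -> th y x),
      (forall x y z, th x y -> th y z -> th x z),
      (forall x y z m m', th x y -> is_meet m x z -> is_meet m' y z -> th m m')
    & (forall x y z j j', th x y -> is_join j x z -> is_join j' y z -> th j j')].

Definition pprod_fun p q (u : 'S_p) (v : 'S_q) (i : 'I_(p + q)) : 'I_(p + q) :=
  unsplit (match split i with inl j => inl (u j) | inr k => inr (v k) end).

Lemma pprod_fun_inj p q (u : 'S_p) (v : 'S_q) : injective (pprod_fun u v).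
Proof.
move=> i j /(can_inj (@unsplitK p q)) H; apply: (can_inj (@splitK p q)).
move: H; case: (split i) => a; case: (split j) => b //= [] /perm_inj -> //.
Qed.

(* u x v = u_1 ... u_p (p+v_1) ... (p+v_q) *)
Definition pprod p q (u : 'S_p) (v : 'S_q) : 'S_(p + q) :=
  perm (@pprod_fun_inj p q u v).

Definition is_st k (s : seq nat) (u : 'S_k) : bool :=
  (size s == k) &&
  [forall i : 'I_k, forall j : 'I_k,
     ((u i < u j)%N == (nth 0%N s i < nth 0%N s j)%N)].

(* subsequence of entries of x lying in [1,p] (here: values < p), and
   in [p+1,p+q] (here: values >= p) *)
Definition low_seq p q (x : 'S_(p + q)) : seq nat :=
  [seq val (x i) | i <- enum 'I_(p + q) & (val (x i) < p)%N].
Definition high_seq p q (x : 'S_(p + q)) : seq nat :=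
  [seq val (x i) | i <- enum 'I_(p + q) & (p <= val (x i))%N].

(* xbar_eq x u v  <=>  x_{\bar p} = u x v,
   where x_{\bar p} := st(low part) x st(high part). *)
Definition xbar_eq p q (x : 'S_(p + q)) (u : 'S_p) (v : 'S_q) : bool :=
  [exists u' : 'S_p, exists v' : 'S_q,
     [&& is_st (low_seq x) u', is_st (high_seq x) v' & pprod u' v' == pprod u v]].

Definition translational (Th : forall n, rel 'S_n) : Prop :=
  forall p q (u u' : 'S_p) (v v' : 'S_q),
    Th (p + q)%N (pprod u v) (pprod u' v') <-> (Th p u u' /\ Th q v v').

Definition Zset (Th : forall n, rel 'S_n) n : {set 'S_n} :=
  [set x | [forall y, Th n y x ==> weak_le x y]].

(* K[S_n] is represented by {ffun 'S_n -> K} (coefficient functions);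
   K[Z_n] by coefficient functions supported on Zset Th n. *)

Definition basis (K : fieldType) n (x : 'S_n) : {ffun 'S_n -> K} := [ffun y => (y == x)%:R].

(* Malvenuto–Reutenauer product, bilinear extension of
   u .S v = sum_{x, x_{\bar p} = u x v} x *)
Definition mulS (K : fieldType) p q (f : {ffun 'S_p -> K}) (g : {ffun 'S_q -> K})
  : {ffun 'S_(p + q) -> K} :=
  [ffun x => \sum_(u : 'S_p) \sum_(v : 'S_q) f u * g v * (xbar_eq x u v)%:R].

Definition mulZ (K : fieldType) (Th : forall n, rel 'S_n) p q (u : 'S_p) (v : 'S_q)
  : {ffun 'S_(p + q) -> K} :=
  [ffun x => ((x \in Zset Th (p + q)) && xbar_eq x u v)%:R].

(* c : K[Z_n] -> K[S_n], linear, sending x in Z_n to the sum of its class *)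
Definition cmap (K : fieldType) (Th : forall n, rel 'S_n) n (f : {ffun 'S_n -> K})
  : {ffun 'S_n -> K} :=
  [ffun y => \sum_(x in Zset Th n) f x * (Th n y x)%:R].

(* Main.v *)
Require Import Defs.
From mathcomp Require Import all_boot all_order all_fingroup all_algebra.
From mathcomp Require Import zify.
Import GRing.Theory.

Module Helpers.
Require Import Defs.
Set Implicit Arguments. Unset Strict Implicit. Unset Printing Implicit Defensive.

Lemma card_ord_lt k m : m <= k -> #|[set c : 'I_k | c < m]| = m.
Proof.
move=> hm.
have -> : [set c : 'I_k | c < m] = [set widen_ord hm j | j : 'I_m].
  apply/setP => c; rewrite inE; apply/idP/imsetP.
    by move=> cm; exists (Ordinal cm) => //; apply: val_inj.
  by case=> j _ ->; rewrite /= ltn_ord.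
by rewrite card_imset ?card_ord //; by move=> a b /(congr1 val) /= e; apply: val_inj.
Qed.

Lemma card_lt_perm k (s : 'S_k) (i : 'I_k) : #|[set j | s j < s i]| = s i.
Proof.
have -> : [set j | s j < s i] = s @^-1: [set c : 'I_k | c < s i].
  by apply/setP => j; rewrite !inE.
by rewrite card_preimset ?card_ord_lt //; [apply: ltnW | apply: perm_inj].
Qed.

Lemma perm_order_uniq k (s t : 'S_k) :
  (forall i j, (s i < s j) = (t i < t j)) -> s = t.
Proof.
move=> H; apply/permP => i; apply: ord_inj.
rewrite -card_lt_perm -[RHS]card_lt_perm.
by apply: eq_card => j; rewrite !inE H.
Qed.

Lemma perm_of_order k (lt : rel 'I_k) :
  transitive lt -> irreflexive lt -> (forall i j, i != j -> lt i j || lt j i) ->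
  exists s : 'S_k, forall i j, (s i < s j) = lt i j.
Proof.
move=> tr irr tot.
pose r i := #|[set j | lt j i]|.
have rlt i : r i < k.
  rewrite /r; apply: (@leq_trans #|[set: 'I_k]|); last by rewrite cardsT card_ord.
  apply: proper_card; apply/properP; split.
    by apply/subsetP => c; rewrite inE.
  by exists i; rewrite ?inE ?irr.
have mono i j : lt i j -> r i < r j.
  move=> hij; apply: proper_card; apply/properP; split.
    by apply/subsetP => c; rewrite !inE => /tr; apply.
  by exists i; rewrite !inE ?irr.
pose f i := Ordinal (rlt i).
have finj : injective f.
  move=> i j /(congr1 val) /= e; apply/eqP; apply/negP => /negP /tot /orP [] /mono;
  by rewrite e ltnn.
exists (perm finj) => i j; rewrite !permE /=.
case: (boolP (lt i j)) => [/mono //|nij].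
case: (eqVneq i j) => [->|ne]; first by rewrite ltnn.
have := tot _ _ ne; rewrite (negbTE nij) /= => /mono h.
by rewrite ltnNge ltnW.
Qed.


Section Gen.
Variable n : nat.
Implicit Types x y z m : 'S_n.

Lemma weak_leP x y :
  reflect (forall a b, inv_pair x a b -> inv_pair y a b) (weak_le x y).
Proof.
apply: (iffP forallP) => [H a b|H a].
  by move/forallP: (H a) => /(_ b) /implyP.
by apply/forallP => b; apply/implyP/H.
Qed.

Lemma weak_le_refl x : weak_le x x.
Proof. by apply/weak_leP. Qed.

Lemma weak_le_trans y x z : weak_le x y -> weak_le y z -> weak_le x z.
Proof. by move=> /weak_leP h1 /weak_leP h2; apply/weak_leP => a b /h1 /h2. Qed.

Lemma perm_lt_neq (s : 'S_n) (a b : 'I_n) : a != b -> (s a < s b) = ~~ (s b < s a).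
Proof.
move=> ne; have : s a != s b by rewrite (inj_eq perm_inj).
by rewrite -ltnNge ltn_neqAle => ->.
Qed.

Lemma weak_le_anti x y : weak_le x y -> weak_le y x -> x = y.
Proof.
move=> /weak_leP h1 /weak_leP h2.
have E : forall a b, inv_pair x a b = inv_pair y a b.
  by move=> a b; apply/idP/idP => [/h1|/h2].
have : (x^-1)%g = (y^-1)%g.
  apply: perm_order_uniq => i j.
  case: (ltngtP i j) => ij.
  - have ne : i != j by apply/eqP => e; rewrite e ltnn in ij.
    rewrite (perm_lt_neq _ ne) [in RHS](perm_lt_neq _ ne).
    by have := E i j; rewrite /inv_pair ij /= => ->.
  - by have := E j i; rewrite /inv_pair ij /= => ->.
  - by rewrite (ord_inj ij) !ltnn.
by move=> e; rewrite -[x]invgK e invgK.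
Qed.

Definition bef x (a b : 'I_n) := ((x^-1)%g a < (x^-1)%g b).

Lemma inv_pairE x (a b : 'I_n) : a < b -> inv_pair x a b = ~~ bef x a b.
Proof.
move=> ab; rewrite /inv_pair /bef ab /= perm_lt_neq //.
by apply/eqP => e; rewrite e ltnn in ab.
Qed.

Section Meet.
Variables x y : 'S_n.
Definition medge : rel 'I_n := fun a b => (a < b) && (bef x a b || bef y a b).
Definition MR := connect medge.

Lemma bef_split (s : 'S_n) (a b c : 'I_n) : bef s a b -> bef s a c || bef s c b.
Proof. rewrite /bef => h; case: (ltnP ((s^-1)%g a) ((s^-1)%g c)) => //= h2.
exact: leq_ltn_trans h2 h. Qed.

Lemma MR_trans (a b c : 'I_n) : MR a b -> MR b c -> MR a c.
Proof. exact: connect_trans. Qed.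

Lemma MRC (a b c : 'I_n) : a < c -> c < b -> MR a b -> MR a c || MR c b.
Proof.
move=> ac cb /connectP [pth]; elim: pth a ac => [|d pth IH] a ac /=.
  by move=> _ eb; rewrite eb in cb; move: (ltn_trans ac cb); rewrite ltnn.
move=> /andP [ead pd] eb.
have Rdb : MR d b by apply/connectP; exists pth.
have Rad : MR a d by apply: connect1.
case: (ltngtP c d) => [cd|dc|e].
- move: ead => /andP [_ /orP [] /(bef_split c) /orP [] hb].
  + by rewrite /MR connect1 // /medge ac hb.
  + by rewrite (MR_trans (connect1 (_ : medge c d)) Rdb) ?orbT // /medge cd hb.
  + by rewrite /MR connect1 // /medge ac hb orbT.
  + by rewrite (MR_trans (connect1 (_ : medge c d)) Rdb) ?orbT // /medge cd hb orbT.
- by case/orP: (IH d dc pd eb) => [h|->]; rewrite ?orbT // (MR_trans Rad h).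
- by rewrite (ord_inj e) Rad.
Qed.

Definition mlt (a b : 'I_n) := if a < b then MR a b else if b < a then ~~ MR b a else false.

Lemma mlt_trans : transitive mlt.
Proof.
move=> b a c; case: (eqVneq a b) => [->|nab]; first by rewrite /mlt ltnn.
case: (eqVneq b c) => [->|nbc]; first by rewrite /mlt ltnn.
case: (eqVneq a c) => [->|nac].
  by rewrite /mlt; case: (ltngtP c b) => // _; case: (MR _ _).
have nab' : (a : nat) <> b by move=> e; rewrite (ord_inj e) eqxx in nab.
have nbc' : (b : nat) <> c by move=> e; rewrite (ord_inj e) eqxx in nbc.
have nac' : (a : nat) <> c by move=> e; rewrite (ord_inj e) eqxx in nac.
rewrite /mlt.
case: (ltngtP a b) => ab; case: (ltngtP b c) => bc; case: (ltngtP a c) => ac //; try lia.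
- exact: MR_trans.
- by move=> h1 h2; case/orP: (MRC ac bc h1) => // h; rewrite h in h2.
- by move=> h1 h2; apply/negP => h3; rewrite (MR_trans h3 h1) in h2.
- by move=> h1 h2; case/orP: (MRC ab ac h2) => // h; rewrite h in h1.
- by move=> h1 h2; apply/negP => h3; rewrite (MR_trans h2 h3) in h1.
- move=> h1 h2; apply/negP => h3; case/orP: (MRC bc ab h3) => h4.
    by rewrite h4 in h2.
  by rewrite h4 in h1.
Qed.

Lemma mlt_irr : irreflexive mlt.
Proof. by move=> a; rewrite /mlt ltnn. Qed.

Lemma mlt_tot (a b : 'I_n) : a != b -> mlt a b || mlt b a.
Proof.
move=> ne; rewrite /mlt; case: (ltngtP a b) => ab.
- by case: (MR a b).
- by case: (MR b a).
- by rewrite (ord_inj ab) eqxx in ne.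
Qed.

Lemma meet_exists : exists m, is_meet m x y.
Proof.
have [s Hs] := perm_of_order mlt_trans mlt_irr mlt_tot.
have Inv a b : inv_pair (s^-1)%g a b = (a < b) && ~~ MR a b.
  rewrite /inv_pair invgK Hs /mlt; case: (ltngtP a b) => //= ab; rewrite ?(ord_inj ab) ?ltnn ?andbF //.
have le_gen (w : 'S_n) : (forall a b : 'I_n, a < b -> bef w a b -> medge a b) -> weak_le (s^-1)%g w.
  move=> Hw; apply/weak_leP => a b; rewrite Inv => /andP [ab nR].
  rewrite inv_pairE //; apply/negP => hb; move/negP: nR; apply.
  exact/connect1/Hw.
exists (s^-1)%g; apply/and3P; split.
- by apply: le_gen => a b ab hb; rewrite /medge ab hb.
- by apply: le_gen => a b ab hb; rewrite /medge ab hb orbT.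
apply/forallP => z; apply/implyP => /andP [/weak_leP zx /weak_leP zy].
apply/weak_leP => a b hz; rewrite Inv.
move: (hz); rewrite /inv_pair => /andP [ab hzb]; rewrite ab /=.
apply/negP => /connectP [pth].
suff : forall c, path medge c pth -> ((z^-1)%g c <= (z^-1)%g (last c pth)).
  by move=> H /H h e; rewrite -e in h; rewrite leqNgt hzb in h.
elim: pth => [|d pth IH] c //= /andP [ecd pd].
apply: leq_trans (IH _ pd).
move: ecd => /andP [cd hb].
have : ~~ inv_pair z c d.
  by apply/negP => /[dup] /zx hx /zy hy; case/orP: hb; apply/negP; rewrite -inv_pairE.
by rewrite /inv_pair cd /= -leqNgt.
Qed.
End Meet.

Variable th : rel 'S_n.
Hypothesis Hth : lattice_congruence th.

Definition isZ x := forall y, th y x -> weak_le x y.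

Lemma Z_uniq x y : isZ x -> isZ y -> th x y -> x = y.
Proof.
case: Hth => _ sym _ _ _ zx zy h.
by apply: weak_le_anti; [apply: zx; apply: sym | apply: zy].
Qed.

Definition ninv x := #|[set ab : 'I_n * 'I_n | inv_pair x ab.1 ab.2]|.

Lemma min_exists y : exists m, [/\ isZ m, th y m & weak_le m y].
Proof.
case: Hth => refl sym trans mc _.
have [m hm mmin] := @arg_minnP _ y (fun z => th y z) ninv (refl y).
have Zm : isZ m.
  move=> z hz; have [w hw] := meet_exists m z.
  have thw : th w m.
    apply: (mc z m m); first exact: hz.
    - by move: hw => /and3P [h1 h2 h3]; apply/and3P; split => //;
         apply/forallP => u; move/forallP: h3 => /(_ u); rewrite andbC.
    - apply/and3P; split; rewrite ?weak_le_refl //.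
      by apply/forallP => u; apply/implyP => /andP [].
  have wm : weak_le w m by case/and3P: hw.
  suff e : w = m by rewrite -e; case/and3P: hw.
  apply: weak_le_anti => //; apply/weak_leP => a b hab.
  have sub : [set ab : 'I_n * 'I_n | inv_pair w ab.1 ab.2] \subset
             [set ab : 'I_n * 'I_n | inv_pair m ab.1 ab.2].
    by apply/subsetP => c; rewrite !inE; move/weak_leP: wm; apply.
  have : ninv m <= ninv w by apply: mmin; apply: trans (sym _ _ thw).
  move=> hle; have := eqEcard [set ab : 'I_n * 'I_n | inv_pair w ab.1 ab.2]
             [set ab : 'I_n * 'I_n | inv_pair m ab.1 ab.2].
  rewrite sub hle => /eqP E.
  by move/setP: E => /(_ (a, b)); rewrite !inE /= hab => ->.
by exists m; split => //; apply: Zm.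
Qed.

End Gen.


Lemma index_sorted_ord n (e : seq 'I_n) (i j : 'I_n) :
  sorted (fun a b : 'I_n => a < b) e -> i \in e -> j \in e ->
  (index i e < index j e) = (i < j).
Proof.
move=> se ie je.
have tr : transitive (fun a b : 'I_n => a < b) by move=> b a c; apply: ltn_trans.
apply/idP/idP; first exact: (sorted_ltn_index tr se i j ie je).
move=> ij; case: (ltngtP (index i e) (index j e)) => // h.
  by have := sorted_ltn_index tr se j i je ie h; rewrite ltnNge ltnW.
by move: (congr1 (nth i e) h); rewrite !nth_index // => e'; rewrite e' ltnn in ij.
Qed.

Lemma st_uniq (m : nat) (s : seq nat) (u u' : 'S_m) : is_st s u -> is_st s u' -> u = u'.
Proof.
move=> /andP [_ /forallP h] /andP [_ /forallP h']; apply: perm_order_uniq => i j.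
by move/forallP: (h i) => /(_ j) /eqP ->; move/forallP: (h' i) => /(_ j) /eqP ->.
Qed.

Section Blk.
Variables (n off k : nat) (hk : off + k <= n) (x : 'S_n).
Definition bP (c : 'I_n) := (off <= c) && (c < off + k).
Definition blkseq := [seq val (x i) | i <- enum 'I_n & bP (x i)].

Lemma bseq_mem c : (c \in blkseq) = (off <= c < off + k).
Proof.
apply/mapP/idP => [[i]|h]; first by rewrite mem_filter => /andP [h _] ->.
have cn : c < n by case/andP: h => _ h; exact: leq_trans h hk.
exists ((x^-1)%g (Ordinal cn)); last by rewrite permKV.
by rewrite mem_filter mem_enum permKV andbT.
Qed.

Lemma bseq_uniq : uniq blkseq.
Proof.
rewrite map_inj_uniq ?filter_uniq -?enumT ?enum_uniq //.
by move=> i j /ord_inj /perm_inj.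
Qed.

Lemma bseq_size : size blkseq = k.
Proof.
have : perm_eq blkseq (iota off k).
  apply: uniq_perm; rewrite ?bseq_uniq ?iota_uniq // => c.
  by rewrite bseq_mem mem_iota.
by move/perm_size ->; rewrite size_iota.
Qed.

Lemma bseq_nth i : i < k -> off <= nth 0 blkseq i < off + k.
Proof. by move=> ik; rewrite -bseq_mem mem_nth // bseq_size. Qed.

Lemma bseq_index (c d : 'I_n) : bP c -> bP d ->
  (index (val c) blkseq < index (val d) blkseq) = ((x^-1)%g c < (x^-1)%g d).
Proof.
move=> hc hd.
have inj : injective (fun i => val (x i)) by move=> i j /ord_inj /perm_inj.
rewrite -{1}(permKV x c) -{1}(permKV x d) /blkseq !(index_map inj).
apply: index_sorted_ord; rewrite ?mem_filter /= ?permKV ?hc ?hd -?enumT ?mem_enum //.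
apply: sorted_filter; first by move=> b a e; apply: ltn_trans.
have := iota_ltn_sorted 0 n; rewrite -val_enum_ord sorted_map.
by apply: sub_sorted.
Qed.

Lemma st_exists : exists u : 'S_k, is_st blkseq u /\ forall i, (u i : nat) = nth 0 blkseq i - off.
Proof.
have lt (i : 'I_k) : nth 0 blkseq i - off < k.
  case/andP: (bseq_nth (ltn_ord i)) => h1 h2; lia.
pose f (i : 'I_k) := Ordinal (lt i).
have finj : injective f.
  move=> i j /(congr1 val) /= e; apply: ord_inj.
  case/andP: (bseq_nth (ltn_ord i)) => h1 h2; case/andP: (bseq_nth (ltn_ord j)) => h3 h4.
  have e2 : nth 0 blkseq i = nth 0 blkseq j by lia.
  by apply/eqP; rewrite -(nth_uniq 0 _ _ bseq_uniq) ?bseq_size // e2.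
exists (perm finj); split; last by move=> i; rewrite permE.
rewrite /is_st bseq_size eqxx /=; apply/forallP => i; apply/forallP => j.
rewrite !permE /=; case/andP: (bseq_nth (ltn_ord i)) => h1 h2; case/andP: (bseq_nth (ltn_ord j)) => h3 h4.
apply/eqP; apply/idP/idP; lia.
Qed.



Lemma st_val (u : 'S_k) : is_st blkseq u -> forall i, (u i : nat) + off = nth 0 blkseq i.
Proof.
move=> hu i; have [u' [hu' e]] := st_exists.
rewrite (st_uniq hu hu') e; case/andP: (bseq_nth (ltn_ord i)) => h1 h2; lia.
Qed.

Lemma st_inv (u : 'S_k) : is_st blkseq u -> forall (a b : 'I_k) (a' b' : 'I_n),
  (a' : nat) = off + a -> (b' : nat) = off + b ->
  ((u^-1)%g a < (u^-1)%g b) = ((x^-1)%g a' < (x^-1)%g b').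
Proof.
move=> hu a b a' b' ea eb.
have idx (c : 'I_k) (c' : 'I_n) : (c' : nat) = off + c -> index (c' : nat) blkseq = (u^-1)%g c.
  move=> ec; have := st_val hu ((u^-1)%g c); rewrite permKV => e.
  rewrite ec addnC e index_uniq // ?bseq_uniq // bseq_size //.
rewrite -(idx a a') // -(idx b b') //; apply: bseq_index; rewrite /bP ?ea ?eb; by rewrite leq_addr ltn_add2l ltn_ord.
Qed.
End Blk.


Section PQ.
Variables p q : nat.

Lemma pprod_l (u : 'S_p) (v : 'S_q) i : pprod u v (lshift q i) = lshift q (u i).
Proof. by rewrite /pprod permE /pprod_fun -[lshift q i]/(unsplit (inl i)) unsplitK. Qed.

Lemma pprod_r (u : 'S_p) (v : 'S_q) i : pprod u v (rshift p i) = rshift p (v i).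
Proof. by rewrite /pprod permE /pprod_fun -[rshift p i]/(unsplit (inr i)) unsplitK. Qed.

Lemma pprod_invl (u : 'S_p) (v : 'S_q) i :
  ((pprod u v)^-1)%g (lshift q i) = lshift q ((u^-1)%g i).
Proof. by apply: (@perm_inj _ (pprod u v)); rewrite permKV pprod_l permKV. Qed.

Lemma pprod_invr (u : 'S_p) (v : 'S_q) i :
  ((pprod u v)^-1)%g (rshift p i) = rshift p ((v^-1)%g i).
Proof. by apply: (@perm_inj _ (pprod u v)); rewrite permKV pprod_r permKV. Qed.

Lemma inv_ll (u : 'S_p) (v : 'S_q) a b :
  inv_pair (pprod u v) (lshift q a) (lshift q b) = inv_pair u a b.
Proof. by rewrite /inv_pair !pprod_invl. Qed.

Lemma inv_rr (u : 'S_p) (v : 'S_q) a b :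
  inv_pair (pprod u v) (rshift p a) (rshift p b) = inv_pair v a b.
Proof. by rewrite /inv_pair !pprod_invr /= !ltn_add2l. Qed.

Lemma inv_lr (u : 'S_p) (v : 'S_q) a b :
  inv_pair (pprod u v) (lshift q a) (rshift p b) = false.
Proof.
rewrite /inv_pair pprod_invl pprod_invr /=.
by rewrite [_ < u^-1%g a]ltnNge (leq_trans (ltnW (ltn_ord _)) (leq_addr _ _)) andbF.
Qed.

Lemma inv_rl (u : 'S_p) (v : 'S_q) a b :
  inv_pair (pprod u v) (rshift p a) (lshift q b) = false.
Proof.
rewrite /inv_pair /=.
by rewrite ltnNge (leq_trans (ltnW (ltn_ord _)) (leq_addr _ _)).
Qed.

Lemma pprod_inj (u u' : 'S_p) (v v' : 'S_q) : pprod u v = pprod u' v' -> u = u' /\ v = v'.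
Proof.
move=> e; split; apply/permP => i.
  have := congr1 (fun f : 'S_(p + q) => val (f (lshift q i))) e.
  by rewrite /= !pprod_l /= => /ord_inj.
have := congr1 (fun f : 'S_(p + q) => val (f (rshift p i))) e.
by rewrite /= !pprod_r /= => /eqP; rewrite eqn_add2l => /eqP /ord_inj.
Qed.

Lemma low_bseq (x : 'S_(p + q)) : low_seq x = blkseq 0 p x.
Proof. by rewrite /low_seq /blkseq; congr map; apply: eq_filter => i; rewrite /bP add0n. Qed.

Lemma high_bseq (x : 'S_(p + q)) : high_seq x = blkseq p q x.
Proof. by rewrite /high_seq /blkseq; congr map; apply: eq_filter => i; rewrite /bP ltn_ord andbT. Qed.

Definition lo (x : 'S_(p + q)) : 'S_p := odflt 1%g [pick u | is_st (low_seq x) u].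
Definition hi (x : 'S_(p + q)) : 'S_q := odflt 1%g [pick u | is_st (high_seq x) u].

Lemma lo_st x : is_st (low_seq x) (lo x).
Proof.
rewrite /lo; case: pickP => [//|H] /=.
have hk : 0 + p <= p + q by rewrite add0n leq_addr.
have [u [hu _]] := st_exists hk x.
by have := H u; rewrite low_bseq hu.
Qed.

Lemma hi_st x : is_st (high_seq x) (hi x).
Proof.
rewrite /hi; case: pickP => [//|H] /=.
have hk : p + q <= p + q by [].
have [u [hu _]] := st_exists hk x.
by have := H u; rewrite high_bseq hu.
Qed.

Lemma xbarE x u v : xbar_eq x u v = (u == lo x) && (v == hi x).
Proof.
apply/existsP/andP => [[u' /existsP [v' /and3P [hu hv /eqP e]]]|[/eqP -> /eqP ->]].
  have [e1 e2] := pprod_inj e.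
  by rewrite -e1 -e2 (st_uniq hu (lo_st x)) (st_uniq hv (hi_st x)).
by exists (lo x); apply/existsP; exists (hi x); rewrite lo_st hi_st eqxx.
Qed.

Lemma lo_inv x a b : inv_pair (lo x) a b = inv_pair x (lshift q a) (lshift q b).
Proof.
rewrite /inv_pair /=; congr andb.
have hk : 0 + p <= p + q by rewrite add0n leq_addr.
have hs : is_st (blkseq 0 p x) (lo x) by rewrite -low_bseq lo_st.
by apply: (st_inv hk hs).
Qed.

Lemma hi_inv x a b : inv_pair (hi x) a b = inv_pair x (rshift p a) (rshift p b).
Proof.
rewrite /inv_pair /= ltn_add2l; congr andb.
have hk : p + q <= p + q by [].
have hs : is_st (blkseq p q x) (hi x) by rewrite -high_bseq hi_st.
by apply: (st_inv hk hs).
Qed.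

Definition sameb (a b : 'I_(p + q)) := (a < p) == (b < p).
Definition sigm (x : 'S_(p + q)) := pprod (lo x) (hi x).

Lemma lowl (a : 'I_p) : (lshift q a < p) = true.
Proof. by rewrite /= ltn_ord. Qed.
Lemma lowr (a : 'I_q) : (rshift p a < p) = false.
Proof. by rewrite /= ltnNge leq_addr. Qed.

Lemma sigI x a b : inv_pair (sigm x) a b = sameb a b && inv_pair x a b.
Proof.
rewrite /sigm /sameb.
case: (split_ordP a) => a' ->; case: (split_ordP b) => b' ->;
  rewrite ?inv_ll ?inv_rr ?inv_lr ?inv_rl ?lowl ?lowr ?lo_inv ?hi_inv //.
Qed.

Lemma pprodJ (u : 'S_p) (v : 'S_q) a b : inv_pair (pprod u v) a b -> sameb a b.
Proof.
rewrite /sameb.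
by case: (split_ordP a) => a' ->; case: (split_ordP b) => b' ->;
  rewrite ?inv_lr ?inv_rl ?lowl ?lowr.
Qed.

Lemma sig_fix x : (forall a b, inv_pair x a b -> sameb a b) -> sigm x = x.
Proof.
move=> H; apply: weak_le_anti; apply/weak_leP => a b; rewrite sigI.
  by case/andP.
by move=> h; rewrite h (H _ _ h).
Qed.

Lemma sig_le x : weak_le (sigm x) x.
Proof. by apply/weak_leP => a b; rewrite sigI => /andP []. Qed.

Lemma pprod_le (u u' : 'S_p) (v v' : 'S_q) :
  weak_le u u' -> weak_le v v' -> weak_le (pprod u v) (pprod u' v').
Proof.
move=> /weak_leP h1 /weak_leP h2; apply/weak_leP => a b.
case: (split_ordP a) => a' ->; case: (split_ordP b) => b' ->;
  rewrite ?inv_ll ?inv_rr ?inv_lr ?inv_rl //; [apply: h1 | apply: h2].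
Qed.

Definition Tlt (x : 'S_(p + q)) (a b : 'I_(p + q)) :=
  if sameb a b then (x^-1)%g a < (x^-1)%g b else p <= a.

Lemma T_exists x : exists t : 'S_(p + q), forall a b,
  inv_pair t a b = (sameb a b && inv_pair x a b) || ((a < b) && ~~ sameb a b).
Proof.
have tr : transitive (Tlt x).
  move=> b a c; rewrite /Tlt /sameb.
  case: (ltnP a p) => ha; case: (ltnP b p) => hb; case: (ltnP c p) => hc //=;
  by move=> h1 h2; apply: ltn_trans h1 h2.
have irr : irreflexive (Tlt x) by move=> a; rewrite /Tlt /sameb eqxx ltnn.
have tot a b : a != b -> Tlt x a b || Tlt x b a.
  move=> ne; rewrite /Tlt /sameb.
  by case: (ltnP a p); case: (ltnP b p) => //= _ _; rewrite perm_lt_neq // orNb.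
have [s Hs] := perm_of_order tr irr tot.
exists (s^-1)%g => a b; rewrite /inv_pair invgK Hs /Tlt /sameb eq_sym.
case: (ltnP a p) => ha; case: (ltnP b p) => hb //=; rewrite ?andbT ?andbF ?orbF //.
by apply/esym/negbTE; rewrite -leqNgt ltnW // (leq_trans hb ha).
Qed.

End PQ.


Section Main.
Unset Implicit Arguments.
Variable Th : forall n : nat, rel 'S_n.
Set Implicit Arguments.
Hypothesis HL : forall n : nat, lattice_congruence (Th n).
Hypothesis HT : translational Th.

Lemma inZ (n : nat) (x : 'S_n) : reflect (isZ (Th n) x) (x \in Zset Th n).
Proof.
rewrite inE; apply: (iffP forallP) => [H y hy|H y].
  by move/implyP: (H y); apply.
by apply/implyP/H.
Qed.

Lemma thsym (n : nat) (x y : 'S_n) : Th n x y -> Th n y x.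
Proof. by case: (HL n) => _ s _ _ _; apply: s. Qed.
Lemma thtrans (n : nat) (x y z : 'S_n) : Th n x y -> Th n y z -> Th n x z.
Proof. by case: (HL n) => _ _ t _ _; apply: t. Qed.
Lemma threfl (n : nat) (x : 'S_n) : Th n x x.
Proof. by case: (HL n). Qed.

Lemma inv1 (n : nat) (a b : 'I_n) : inv_pair (1%g : 'S_n) a b = false.
Proof.
rewrite /inv_pair invg1 !perm1; case: ltngtP => //.
Qed.

Section PQ.
Variables p q : nat.

Lemma prod_Z (u : 'S_p) (v : 'S_q) :
  isZ (Th p) u -> isZ (Th q) v -> isZ (Th (p + q)) (pprod u v).
Proof.
move=> Zu Zv.
have [m [Zm thm mle]] := min_exists (HL (p + q)) (pprod u v).
have fix_m : sigm m = m.
  apply: sig_fix => a b h; apply: (@pprodJ _ _ u v).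
  by move/weak_leP: mle; apply.
move: thm; rewrite -fix_m /sigm => /HT [h1 h2].
have le1 := Zu _ (thsym h1); have le2 := Zv _ (thsym h2).
have e : pprod u v = m.
  apply: weak_le_anti => //; rewrite -fix_m; exact: pprod_le.
by rewrite e.
Qed.

Lemma claimA (m y : 'S_(p + q)) : Th _ m y -> weak_le m y -> Th _ (sigm m) (sigm y).
Proof.
move=> th le; case: (HL (p + q)) => _ _ _ mc _.
apply: (mc m y (sigm y)) => //.
  apply/and3P; split; first exact: sig_le.
    apply/weak_leP => a b; rewrite !sigI => /andP [-> h] /=.
    by move/weak_leP: le; apply.
  apply/forallP => z; apply/implyP => /andP [/weak_leP z1 /weak_leP z2].
  apply/weak_leP => a b hz; rewrite sigI z1 //.
  by move: (z2 _ _ hz); rewrite sigI andbT => /andP [].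
apply/and3P; split; [exact: sig_le | exact: weak_le_refl |].
by apply/forallP => z; apply/implyP => /andP [].
Qed.

Lemma join_T (x t t0 : 'S_(p + q)) :
  (forall a b, inv_pair x a b -> sameb a b) ->
  (forall a b, inv_pair t a b = (sameb a b && inv_pair x a b) || ((a < b) && ~~ sameb a b)) ->
  (forall a b, inv_pair t0 a b = (sameb a b && inv_pair 1%g a b) || ((a < b) && ~~ sameb a b)) ->
  is_join t x t0.
Proof.
move=> xJ Ht Ht0; apply/and3P; split.
- by apply/weak_leP => a b h; rewrite Ht h (xJ _ _ h).
- by apply/weak_leP => a b; rewrite Ht0 Ht inv1 andbF /= => ->; rewrite orbT.
apply/forallP => z; apply/implyP => /andP [/weak_leP z1 /weak_leP z2].
apply/weak_leP => a b; rewrite Ht => /orP [/andP [_ h]|h]; first exact: z1.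
by apply: z2; rewrite Ht0 h orbT.
Qed.

Lemma claimB (m : 'S_(p + q)) : isZ (Th _) m -> isZ (Th _) (sigm m).
Proof.
move=> Zm.
have [w [Zw thw wle]] := min_exists (HL (p + q)) (sigm m).
have wJ : forall a b, inv_pair w a b -> sameb a b.
  by move=> a b h; move/weak_leP: wle => /(_ _ _ h); rewrite sigI => /andP [].
have sJ : forall a b, inv_pair (sigm m) a b -> sameb a b.
  by move=> a b; rewrite sigI => /andP [].
have [tw Htw] := T_exists w.
have [ts Hts] := T_exists (sigm m).
have [t0 Ht0] := T_exists (1%g : 'S_(p + q)).
case: (HL (p + q)) => _ _ _ mc jc.
have thT : Th _ tw ts.
  apply: (jc w (sigm m) t0); first exact: thsym.
    exact: join_T.
  exact: join_T.
have [zz hzz] := meet_exists tw m.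
have thz : Th _ zz m.
  apply: (mc tw ts m) => //.
  apply/and3P; split; last first.
  - by apply/forallP => z; apply/implyP => /andP [].
  - exact: weak_le_refl.
  apply/weak_leP => a b h; rewrite Hts sigI h andbT.
  by case: (sameb a b) => //=; move: h; rewrite /inv_pair => /andP [->].
have ezz : zz = m.
  apply: weak_le_anti; first by case/and3P: hzz.
  by apply: Zm.
have mT : weak_le m tw by rewrite -ezz; case/and3P: hzz.
have e : sigm m = w.
  apply: weak_le_anti => //; apply/weak_leP => a b.
  rewrite sigI => /andP [sab h]; move/weak_leP: mT => /(_ _ _ h).
  by rewrite Htw sab /= andbF orbF.
by rewrite e.
Qed.

Lemma pprod_eqE (u u' : 'S_p) (v v' : 'S_q) :
  (pprod u v == pprod u' v') = (u == u') && (v == v').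
Proof.
apply/eqP/andP => [/pprod_inj [-> ->] //|[/eqP -> /eqP ->] //].
Qed.

Lemma keyl (y m : 'S_(p + q)) (u : 'S_p) (v : 'S_q) :
  isZ (Th p) u -> isZ (Th q) v -> isZ (Th _) m -> Th _ y m -> weak_le m y ->
  (sigm m == pprod u v) = Th _ (sigm y) (pprod u v).
Proof.
move=> Zu Zv Zm thm le.
have hA := claimA (thsym thm) le.
apply/eqP/idP => [e|h].
  by rewrite -e; apply: thsym.
apply: (Z_uniq (HL (p + q)) (claimB Zm) (prod_Z Zu Zv)).
exact: thtrans hA h.
Qed.

End PQ.
End Main.


End Helpers.
Import Helpers.

Local Open Scope ring_scope.

Theorem theorem1p2 (K : fieldType) (Th : forall n, rel 'S_n) :
  (forall n, lattice_congruence (Th n)) ->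
  translational Th ->
  (* multiplicativity on basis elements *)
  (forall p q (u : 'S_p) (v : 'S_q),
     u \in Zset Th p -> v \in Zset Th q ->
     cmap Th (mulZ K Th u v) = mulS (cmap Th (basis K u)) (cmap Th (basis K v)))
  (* unit preserved: the unit is the empty permutation in S_0 *)
  /\ cmap Th (basis K (1%g : 'S_0)) = basis K (1%g : 'S_0)
  (* injectivity on each graded piece K[Z_n] *)
  /\ (forall n (f g : {ffun 'S_n -> K}),
        (forall x, x \notin Zset Th n -> f x = 0) ->
        (forall x, x \notin Zset Th n -> g x = 0) ->
        cmap Th f = cmap Th g -> f = g).
Proof.
move=> HL HT.
have sumZ : forall (n : nat) (F : 'S_n -> K) (y m : 'S_n), m \in Zset Th n -> Th n y m ->
   \sum_(x in Zset Th n) F x * (Th n y x)%:R = F m.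
  move=> n F y m mZ hym; rewrite (bigD1 m) //= hym mulr1 big1 ?addr0 // => x /andP [xZ ne].
  case hyx: (Th n y x); last by rewrite mulr0.
  have e : x = m.
    apply: (Z_uniq (HL n)); [exact/(inZ Th) | exact/(inZ Th) |].
    exact: (thtrans HL (thsym HL hyx) hym).
  by rewrite e eqxx in ne.
have cb : forall (n : nat) (w w' : 'S_n), w \in Zset Th n ->
    cmap Th (basis K w) w' = (Th n w' w)%:R.
  move=> n w w' wZ; rewrite ffunE (bigD1 w) //= ffunE eqxx mul1r big1 ?addr0 //.
  by move=> x /andP [_ ne]; rewrite ffunE (negbTE ne) mul0r.
split; last split.
- move=> p q u v uZ vZ; apply/ffunP => y; rewrite !ffunE.
  have [m [Zm thm mle]] := min_exists (HL (p + q)%N) y.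
  have mZ : m \in Zset Th (p + q)%N by apply/(inZ Th).
  rewrite (sumZ _ (fun x => mulZ K Th u v x) y m mZ thm) ffunE mZ /=.
  rewrite (bigD1 (lo y)) //= (bigD1 (hi y)) //=.
  rewrite [xbar_eq y _ _]xbarE !eqxx /= mulr1.
  rewrite big1 ?addr0; last first.
    by move=> v' ne; rewrite xbarE eqxx (negbTE ne) /= mulr0.
  rewrite big1 ?addr0; last first.
    move=> u' ne; apply: big1 => v' _.
    by rewrite xbarE (negbTE ne) /= mulr0.
  rewrite !cb // -natrM mulnb xbarE; congr (_%:R).
  rewrite -pprod_eqE eq_sym.
  rewrite -[Defs.pprod (lo m) (hi m)]/(sigm m).
  rewrite (keyl HL HT (elimT (inZ Th u) uZ) (elimT (inZ Th v) vZ) Zm thm mle).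
  rewrite /sigm; have [H1 H2] := HT _ _ (lo y) u (hi y) v.
  case: (boolP (Th _ (Defs.pprod _ _) _)) => h.
    by case: (H1 h) => -> ->.
  case: (boolP (Th p (lo y) u)) => a //=; case: (boolP (Th q (hi y) v)) => b //=.
  by move/negP: h; case; apply: H2.
- apply/ffunP => y; rewrite !ffunE.
  have e : forall z : 'S_0, z = 1%g by move=> z; apply/permP => [[]].
  have oneZ : (1%g : 'S_0) \in Zset Th 0.
    by apply/(inZ Th) => z _; apply/weak_leP => [[]].
  rewrite (sumZ _ _ y 1%g oneZ) ?ffunE ?(e y) ?eqxx //.
  exact: threfl.
- move=> n f g hf hg hfg; apply/ffunP => x.
  case: (boolP (x \in Zset Th n)) => xZ; last by rewrite hf ?hg.
  have := congr1 (fun F : {ffun 'S_n -> K} => F x) hfg; rewrite /= !ffunE.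
  by rewrite !(sumZ _ _ x x xZ (threfl HL x)).
Qed.
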